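(* Let $k\ge4$, $\lambda>0$, $0<\theta<1$. Put $\theta_c(k)=\frac{k-1}{k+1}$, $\theta_c'(k)=\frac{k-1}{k}$, $\lambda_{\rm cr}'(k)=\frac{1}{k-1-k\theta}$ (for $\theta<\theta'_c(k)$) and $\lambda_{\rm cr}(k)=\frac{1}{k-1-(k+1)\theta}\bigl(\frac{k+1}{k}\bigr)^k$ (for $\theta<\theta_c(k)$). Then: (1) if $\theta\ge\theta'_c(k)$, or $\theta<\theta'_c(k)$ and $\lambda<\lambda'_{\rm cr}(k)$, there exists exactly one TISGM; (2) if $\theta<\theta_c(k)$ and $\lambda>\lambda_{\rm cr}(k)$, there exist at least three TISGMs.
   Context: SCWR model on the Cayley tree of order $k$ (each vertex has $k$ direct successors), spins in $\{-1,0,1\}$, activity $\lambda>0$, $\theta=e^{-J\beta}$; ferromagnetic means $0<\theta<1$. TISGMs are in one-to-one correspondence with the solutions $(x,y)\in(0,\infty)^2$ of $x=\lambda\bigl(\frac{1+x+\theta y}{1+x+y}\bigr)^k$, $y=\lambda\bigl(\frac{1+\theta x+y}{1+x+y}\bigr)^k$; the number of TISGMs is the number of such solutions. *)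

(* Defs.v *)
From Stdlib Require Import Reals Lra.
Open Scope R_scope.

(* (x,y) is a positive solution of the TISGM system for the SCWR model
   on the Cayley tree of order k with activity lam and theta = exp(-J beta). *)
Definition is_TISGM_sol (k : nat) (lam theta : R) (x y : R) : Prop :=
  0 < x /\ 0 < y /\
  x = lam * ((1 + x + theta * y) / (1 + x + y)) ^ k /\
  y = lam * ((1 + theta * x + y) / (1 + x + y)) ^ k.

(* TISGMs are in bijection with positive solutions. *)
Definition exactly_one_TISGM (k : nat) (lam theta : R) : Prop :=
  exists x y, is_TISGM_sol k lam theta x y /\
    forall x' y', is_TISGM_sol k lam theta x' y' -> x' = x /\ y' = y.

Definition at_least_three_TISGM (k : nat) (lam theta : R) : Prop :=
  exists x1 y1 x2 y2 x3 y3,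
    is_TISGM_sol k lam theta x1 y1 /\
    is_TISGM_sol k lam theta x2 y2 /\
    is_TISGM_sol k lam theta x3 y3 /\
    (x1, y1) <> (x2, y2) /\ (x1, y1) <> (x3, y3) /\ (x2, y2) <> (x3, y3).

Definition theta_c (k : nat) : R := (INR k - 1) / (INR k + 1).
Definition theta_c' (k : nat) : R := (INR k - 1) / INR k.
Definition lambda_cr' (k : nat) (theta : R) : R := 1 / (INR k - 1 - INR k * theta).
Definition lambda_cr (k : nat) (theta : R) : R :=
  1 / (INR k - 1 - (INR k + 1) * theta) * ((INR k + 1) / INR k) ^ k.

(* Main.v *)
Require Import Defs.
From Stdlib Require Import Reals Lra Lia Psatz.
Open Scope R_scope.

Lemma pow_lt_strict a b n : 0 <= a -> a < b -> a ^ (S n) < b ^ (S n).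
Proof.
  intros Ha Hab. induction n.
  - simpl. lra.
  - change (a * a ^ (S n) < b * b ^ (S n)).
    assert (0 <= a ^ S n) by (apply pow_le; lra).
    nra.
Qed.

Lemma pow_diff_le u v n : 0 <= v -> v <= u ->
  u ^ (S n) - v ^ (S n) <= INR (S n) * u ^ n * (u - v).
Proof.
  intros Hv Hvu. induction n.
  - simpl. lra.
  - change (u * u ^ (S n) - v * v ^ (S n) <= INR (S (S n)) * (u * u ^ n) * (u - v)).
    rewrite S_INR.
    assert (h1 : v ^ S n <= u ^ S n) by (apply pow_incr; lra).
    assert (h2 : u ^ S n = u * u ^ n) by reflexivity.
    assert (0 <= u ^ n) by (apply pow_le; lra).
    assert (u * u ^ S n - v * v ^ S n = u * (u ^ S n - v ^ S n) + v ^ S n * (u - v)) by ring.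
    assert (u * (u ^ S n - v ^ S n) <= u * (INR (S n) * u ^ n * (u - v))) by (apply Rmult_le_compat_l; lra).
    assert (v ^ S n * (u - v) <= u ^ S n * (u - v)) by (apply Rmult_le_compat_r; lra).
    nra.
Qed.

Lemma trap u v n : 0 <= v -> v <= u ->
  2 * (u ^ (S n) - v ^ (S n)) <= INR (S n) * (u - v) * (u ^ n + v ^ n).
Proof.
  intros Hv Hvu.
  assert (H : forall n, (2 * (u ^ (S n) - v ^ (S n)) <= INR (S n) * (u - v) * (u ^ n + v ^ n)) /\
                        (2 * (u ^ (S (S n)) - v ^ (S (S n))) <= INR (S (S n)) * (u - v) * (u ^ (S n) + v ^ (S n)))).
  { induction n0 as [|n0 [IH1 IH2]].
    - simpl. split; lra.
    - split; [exact IH2|].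
      assert (E : u ^ S (S (S n0)) - v ^ S (S (S n0)) =
                  (u - v) * (u ^ S (S n0) + v ^ S (S n0)) + u * v * (u ^ S n0 - v ^ S n0)) by (simpl; ring).
      assert (F : u * v * (u ^ n0 + v ^ n0) <= u ^ S (S n0) + v ^ S (S n0)).
      { assert (u ^ S (S n0) + v ^ S (S n0) - u * v * (u ^ n0 + v ^ n0) = (u ^ S n0 - v ^ S n0) * (u - v)) by (simpl; ring).
        assert (v ^ S n0 <= u ^ S n0) by (apply pow_incr; lra). nra. }
      assert (G : u * v * (2 * (u ^ S n0 - v ^ S n0)) <= u * v * (INR (S n0) * (u - v) * (u ^ n0 + v ^ n0))).
      { apply Rmult_le_compat_l; [nra|exact IH1]. }
      rewrite E. rewrite !S_INR. rewrite !S_INR in G.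
      assert (0 <= INR n0) by apply pos_INR.
      assert (0 <= u - v) by lra.
      assert (INR n0 * (u - v) * (u * v * (u ^ n0 + v ^ n0)) <= INR n0 * (u - v) * (u ^ S (S n0) + v ^ S (S n0))).
      { apply Rmult_le_compat_l; [nra|exact F]. }
      nra. }
  apply H.
Qed.

Lemma lemM u n : 0 <= u <= 1 -> u ^ n * (INR n + 1 - INR n * u) <= 1.
Proof.
  intros Hu. induction n.
  - simpl. lra.
  - rewrite S_INR.
    assert (0 <= u ^ n) by (apply pow_le; lra).
    assert (u ^ S n * (INR n + 1 + 1 - (INR n + 1) * u) - u ^ n * (INR n + 1 - INR n * u)
            = - (INR n + 1) * u ^ n * (1 - u) * (1 - u)) by (simpl; ring).
    assert (0 <= INR n) by apply pos_INR.
    assert (0 <= (INR n + 1) * u ^ n * (1 - u) * (1 - u)).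
    { apply Rmult_le_pos; [apply Rmult_le_pos; [apply Rmult_le_pos|]|]; lra. }
    lra.
Qed.

Lemma asym k lam th x y : (4 <= k)%nat -> 0 < lam -> 0 < th -> th < 1 ->
  (th >= theta_c' k \/ (th < theta_c' k /\ lam < lambda_cr' k th)) ->
  is_TISGM_sol k lam th x y -> y < x -> False.
Proof.
  intros hk hl h0 h1 cond [hx [hy [ex ey]]] hyx.
  destruct k as [|m]; [lia|].
  assert (hm : 3 <= INR m) by (replace 3 with (INR 3) by (simpl; lra); apply le_INR; lia).
  unfold theta_c', lambda_cr' in cond. rewrite S_INR in cond.
  set (s := 1 + x + y) in *.
  assert (hs : 0 < s) by (unfold s; lra).
  set (u := (1 + x + th * y) / s) in *.
  set (v := (1 + th * x + y) / s) in *.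
  assert (huv : s * (u - v) = (1 - th) * (x - y)) by (unfold u, v, s; field; lra).
  assert (hv : th < v).
  { unfold v. apply (Rmult_lt_reg_r s); [lra|]. unfold Rdiv. rewrite Rmult_assoc, Rinv_l by lra.
    unfold s; nra. }
  assert (hu1 : u < 1).
  { unfold u. apply (Rmult_lt_reg_r s); [lra|]. unfold Rdiv. rewrite Rmult_assoc, Rinv_l by lra.
    unfold s; nra. }
  assert (hvu : v < u).
  { assert (0 < s * (u - v)) by (rewrite huv; nra). nra. }
  assert (key : s * (u - v) = (1 - th) * lam * (u ^ S m - v ^ S m)).
  { rewrite huv. rewrite ex at 1. rewrite ey at 1. ring. }
  assert (hsx : s = 1 + lam * u ^ S m + lam * v ^ S m).
  { unfold s at 1. rewrite ex at 1. rewrite ey at 1. ring. }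
  assert (Um : 0 <= u ^ m) by (apply pow_le; lra).
  assert (Vm : 0 <= v ^ m) by (apply pow_le; lra).
  assert (eu : u ^ S m = u * u ^ m) by reflexivity.
  assert (ev : v ^ S m = v * v ^ m) by reflexivity.
  destruct (Rle_or_lt ((INR m + 1) / (INR m + 1 + 2)) th) as [hA | hB].
  -
    assert (hA' : INR m + 1 <= th * (INR m + 1 + 2)).
    { apply (Rmult_le_compat_r (INR m + 1 + 2)) in hA; [|lra].
      unfold Rdiv in hA. rewrite Rmult_assoc, Rinv_l in hA by lra. lra. }
    pose proof (trap u v m ltac:(lra) ltac:(lra)) as T.
    rewrite S_INR in T.
    assert (T2 : 2 * s * (u - v) <= (1 - th) * lam * ((INR m + 1) * (u - v) * (u ^ m + v ^ m))).
    { rewrite Rmult_assoc, key.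
      replace (2 * ((1 - th) * lam * (u ^ S m - v ^ S m))) with ((1 - th) * lam * (2 * (u ^ S m - v ^ S m))) by ring.
      apply Rmult_le_compat_l; [nra|exact T]. }
    assert (T3 : 2 * s <= (1 - th) * lam * (INR m + 1) * (u ^ m + v ^ m)).
    { apply (Rmult_le_reg_r (u - v)); [lra|]. nra. }
    assert (T4 : (1 - th) * (INR m + 1) <= 2 * th) by nra.
    assert (T5 : (1 - th) * lam * (INR m + 1) * (u ^ m + v ^ m) <= 2 * th * lam * (u ^ m + v ^ m)).
    { assert (0 <= lam * (u ^ m + v ^ m)) by nra. nra. }
    assert (T6 : th * (u ^ m + v ^ m) <= u ^ S m + v ^ S m) by nra.
    nra.
  -
    assert (hB' : th * (INR m + 1 + 2) < INR m + 1).
    { apply (Rmult_lt_compat_r (INR m + 1 + 2)) in hB; [|lra].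
      unfold Rdiv in hB. rewrite Rmult_assoc, Rinv_l in hB by lra. lra. }
    assert (hlc : lam * (INR m + 1 - 1 - (INR m + 1) * th) < 1).
    { destruct cond as [c | [c1 c2]].
      - exfalso. apply Rge_le in c.
        apply (Rmult_le_compat_r (INR m + 1)) in c; [|lra].
        unfold Rdiv in c. rewrite Rmult_assoc, Rinv_l in c by lra. nra.
      - assert (0 < INR m + 1 - 1 - (INR m + 1) * th).
        { apply (Rmult_lt_compat_r (INR m + 1)) in c1; [|lra].
          unfold Rdiv in c1. rewrite Rmult_assoc, Rinv_l in c1 by lra. lra. }
        apply (Rmult_lt_compat_r (INR m + 1 - 1 - (INR m + 1) * th)) in c2; [|lra].
        unfold Rdiv in c2. rewrite Rmult_1_l, Rinv_l in c2 by lra. lra. }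
    pose proof (pow_diff_le u v m ltac:(lra) ltac:(lra)) as L.
    rewrite S_INR in L.
    assert (B1 : s * (u - v) <= (1 - th) * lam * ((INR m + 1) * u ^ m * (u - v))).
    { rewrite key. apply Rmult_le_compat_l; [nra|exact L]. }
    assert (B2 : s <= (1 - th) * lam * (INR m + 1) * u ^ m).
    { apply (Rmult_le_reg_r (u - v)); [lra|]. nra. }
    pose proof (lemM u m ltac:(lra)) as M.
    assert (hum1 : u ^ m <= 1).
    { destruct m; [simpl; lra|]. pose proof (pow_lt_1_compat u (S m) ltac:(lra) ltac:(lia)). lra. }
    set (a := (1 - th) * (INR m + 1)) in *.
    assert (ha : (INR m + 1) <= a * INR m).
    { unfold a. nra. }
    assert (B3 : a * u ^ m - u * u ^ m <= a - 1).
    { (* INR m*(1 - u*U) <= (INR m+1)*(1-U) from M; a*(1-U) >= ((m+1)/m)(1-U) *)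
      assert (INR m * (a * (1 - u ^ m)) >= (INR m + 1) * (1 - u ^ m)) by nra.
      assert (INR m * (1 - u * u ^ m) <= (INR m + 1) * (1 - u ^ m)) by nra.
      assert (INR m * (a - 1 - (a * u ^ m - u * u ^ m)) >= 0) by nra.
      nra. }
    assert (0 <= lam * v ^ S m) by (apply Rmult_le_pos; [lra| apply pow_le; lra]).
    assert (1 < lam * (a * u ^ m - u * u ^ m)) by (rewrite eu in hsx; unfold a in *; nra).
    assert (lam * (a * u ^ m - u * u ^ m) <= lam * (a - 1)) by (apply Rmult_le_compat_l; lra).
    unfold a in *. nra.
Qed.

Lemma sol_swap k lam th x y : is_TISGM_sol k lam th x y -> is_TISGM_sol k lam th y x.
Proof.
  intros [hx [hy [ex ey]]]. split; [lra|split; [lra|split]].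
  - rewrite ey at 1. f_equal. f_equal. f_equal; ring.
  - rewrite ex at 1. f_equal. f_equal. f_equal; ring.
Qed.

Lemma sym_exists k lam th : (1 <= k)%nat -> 0 < lam -> 0 < th -> th < 1 ->
  exists x0, is_TISGM_sol k lam th x0 x0.
Proof.
  intros hk hl h0 h1.
  set (f := fun x => x - lam * ((1 + (1 + th) * x) / (1 + 2 * x)) ^ k).
  assert (c : forall a, 0 <= a <= lam -> continuity_pt f a).
  { intros a ha. unfold f. reg. lra. }
  assert (f0 : f 0 < 0).
  { unfold f. replace ((1 + (1 + th) * 0) / (1 + 2 * 0)) with 1 by field. rewrite pow1. lra. }
  assert (fl : 0 < f lam).
  { unfold f. set (h := (1 + (1 + th) * lam) / (1 + 2 * lam)).
    assert (0 <= h < 1).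
    { unfold h. split.
      - apply Rmult_le_pos; [nra| left; apply Rinv_0_lt_compat; lra].
      - apply (Rmult_lt_reg_r (1 + 2 * lam)); [lra|]. unfold Rdiv.
        rewrite Rmult_assoc, Rinv_l by lra. nra. }
    pose proof (pow_lt_1_compat h k ltac:(lra) ltac:(lia)). nra. }
  destruct (Ranalysis5.IVT_interv f 0 lam c hl f0 fl) as [z [hz fz]].
  assert (z <> 0) by (intro; subst; lra).
  exists z. unfold f in fz.
  assert (ez : z = lam * ((1 + (1 + th) * z) / (1 + 2 * z)) ^ k) by lra.
  split; [lra|split;[lra|split]].
  - rewrite ez at 1. f_equal. f_equal. f_equal; ring.
  - rewrite ez at 1. f_equal. f_equal. f_equal; ring.
Qed.

Lemma sym_unique k lam th x z : (1 <= k)%nat -> 0 < lam -> 0 < th -> th < 1 ->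
  is_TISGM_sol k lam th x x -> is_TISGM_sol k lam th z z -> x = z.
Proof.
  intros hk hl h0 h1 [hx [_ [ex _]]] [hz [_ [ez _]]].
  assert (H : forall a b, 0 < a -> 0 < b -> a < b ->
            a = lam * ((1 + a + th * a) / (1 + a + a)) ^ k ->
            b = lam * ((1 + b + th * b) / (1 + b + b)) ^ k -> False).
  { intros a b ha hb hab ea eb.
    destruct k as [|m]; [lia|].
    set (ha' := (1 + a + th * a) / (1 + a + a)) in *.
    set (hb' := (1 + b + th * b) / (1 + b + b)) in *.
    assert (0 <= hb').
    { unfold hb'. apply Rmult_le_pos; [nra| left; apply Rinv_0_lt_compat; lra]. }
    assert (hb' < ha').
    { unfold ha', hb'.
      assert (ha' - hb' = (1 - th) * (b - a) / ((1 + a + a) * (1 + b + b))) by (unfold ha', hb'; field; lra).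
      unfold ha', hb' in H0. assert (0 < (1 - th) * (b - a) / ((1 + a + a) * (1 + b + b))).
      { apply Rdiv_lt_0_compat; nra. }
      lra. }
    pose proof (pow_lt_strict hb' ha' m ltac:(lra) ltac:(lra)). nra. }
  destruct (Rtotal_order x z) as [l|[e|g]]; auto.
  - exfalso. exact (H x z hx hz l ex ez).
  - exfalso. exact (H z x hz hx g ez ex).
Qed.

Fixpoint Sg (n:nat) (p:R) : R := match n with 0 => 1 | S n' => Sg n' p + p^(S n') end.

Lemma Sg_cont n : continuity (Sg n).
Proof. induction n; simpl; reg. Qed.

Lemma Sg_ge1 n p : 0 <= p -> 1 <= Sg n p.
Proof. intros hp. induction n; simpl; [lra|]. assert (0 <= p * p ^ n) by (apply Rmult_le_pos; [lra|apply pow_le; lra]). lra. Qed.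

Lemma Sg_succ n p : Sg (S n) p = 1 + p * Sg n p.
Proof. induction n. - simpl. ring. - change (Sg (S n) p + p ^ S (S n) = 1 + p * (Sg n p + p ^ S n)). rewrite IHn. simpl. ring. Qed.

Lemma Sg_one n : Sg n 1 = INR n + 1.
Proof. induction n. - simpl. lra. - change (Sg n 1 + 1 ^ S n = INR (S n) + 1). rewrite IHn, pow1, S_INR. ring. Qed.

Lemma Sg_bound n p : 1 <= p -> Sg n p <= 1 + INR n * p ^ n.
Proof.
  intros hp. induction n. - simpl. lra.
  - change (Sg n p + p ^ S n <= 1 + INR (S n) * p ^ S n). rewrite S_INR.
    assert (p ^ n <= p ^ S n).
    { change (p ^ n <= p * p ^ n). assert (1 <= p ^ n) by (apply pow_R1_Rle; lra). nra. }
    assert (0 <= INR n) by apply pos_INR.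
    assert (INR n * p ^ n <= INR n * p ^ S n) by (apply Rmult_le_compat_l; lra).
    lra.
Qed.

Lemma asym_exists k lam th : (4 <= k)%nat -> 0 < lam -> 0 < th -> th < 1 ->
  th < theta_c k -> lam > lambda_cr k th ->
  exists x y, is_TISGM_sol k lam th x y /\ y < x.
Proof.
  intros hk hl h0 h1 hc hlc.
  destruct k as [|m]; [lia|].
  unfold theta_c, lambda_cr in *. rewrite S_INR in hc, hlc.
  assert (hm : 3 <= INR m) by (replace 3 with (INR 3) by (simpl; lra); apply le_INR; lia).
  set (K := INR m + 1) in *.
  assert (hden : 0 < K - 1 - (K + 1) * th).
  { apply (Rmult_lt_compat_r (K + 1)) in hc; [|unfold K; lra].
    unfold Rdiv in hc. rewrite Rmult_assoc, Rinv_l in hc by (unfold K; lra). lra. }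
  set (H := fun p => lam * (Sg m p) ^ (S m) * ((1 - th) * Sg (S m) p - 1 - p ^ (S m)) - (Sg (S m) p) ^ (S m)).
  set (f := fun p => - H p).
  assert (cf : continuity f).
  { unfold f, H. reg; apply Sg_cont. }
  assert (f1 : f 1 < 0).
  { unfold f, H. rewrite !Sg_one, pow1. rewrite S_INR. fold K.
    replace ((1 - th) * (K + 1) - 1 - 1) with (K - 1 - (K + 1) * th) by ring.
    assert (e : ((K + 1) / K) ^ S m = (K + 1) ^ S m / K ^ S m).
    { unfold Rdiv. rewrite Rpow_mult_distr, pow_inv. reflexivity. }
    rewrite e in hlc.
    assert (0 < K ^ S m) by (apply pow_lt; unfold K; lra).
    assert (lam * (K - 1 - (K + 1) * th) > (K + 1) ^ S m / K ^ S m).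
    { apply (Rmult_lt_compat_r (K - 1 - (K + 1) * th)) in hlc; [|lra].
      replace (1 / (K - 1 - (K + 1) * th) * ((K + 1) ^ S m / K ^ S m) * (K - 1 - (K + 1) * th))
        with ((K + 1) ^ S m / K ^ S m) in hlc by (field; lra).
      lra. }
    apply (Rmult_lt_compat_r (K ^ S m)) in H1; [|lra].
    unfold Rdiv in H1. rewrite Rmult_assoc, Rinv_l in H1 by lra. nra. }
  set (p1 := INR m / th).
  assert (hp1 : 3 <= p1 * th /\ p1 * th = INR m) by (unfold p1; split; field_simplify; lra).
  assert (hp1' : 1 < p1) by nra.
  assert (fp1 : 0 < f p1).
  { unfold f, H.
    assert (b : Sg (S m) p1 <= 1 + INR m * p1 ^ m + p1 ^ S m).
    { simpl Sg at 1. pose proof (Sg_bound m p1 ltac:(lra)). simpl. lra. }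
    assert (ep : p1 ^ S m = p1 * p1 ^ m) by reflexivity.
    assert (0 < p1 ^ m) by (apply pow_lt; lra).
    assert (w : (1 - th) * Sg (S m) p1 - 1 - p1 ^ S m <= 0).
    { assert ((1 - th) * Sg (S m) p1 <= (1 - th) * (1 + INR m * p1 ^ m + p1 ^ S m)) by (apply Rmult_le_compat_l; lra).
      assert (e2 : th * p1 ^ S m = INR m * p1 ^ m) by (rewrite ep; destruct hp1 as [_ hp1]; rewrite <- hp1; ring).
      assert (0 <= th * (INR m * p1 ^ m)) by (apply Rmult_le_pos; [lra| apply Rmult_le_pos; lra]).
      assert (e3 : (1 - th) * (1 + INR m * p1 ^ m + p1 ^ S m) - 1 - p1 ^ S m = - th - th * (INR m * p1 ^ m)) by (rewrite <- e2; ring).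
      lra. }
    assert (0 < Sg m p1 ^ S m) by (apply pow_lt; pose proof (Sg_ge1 m p1); lra).
    assert (0 < Sg (S m) p1 ^ S m) by (apply pow_lt; pose proof (Sg_ge1 (S m) p1); lra).
    assert (lam * Sg m p1 ^ S m * ((1 - th) * Sg (S m) p1 - 1 - p1 ^ S m) <= 0).
    { assert (0 < lam * Sg m p1 ^ S m) by nra. nra. }
    lra. }
  destruct (IVT f 1 p1 cf hp1' f1 fp1) as [p [hp fp]].
  assert (hp1r : 1 < p) by (destruct (Req_dec p 1) as [e|e]; [subst; lra| lra]).
  unfold f, H in fp.
  set (Q := Sg m p) in *. set (T := Sg (S m) p) in *. set (P := p ^ S m) in *.
  assert (hQ : 1 <= Q) by (apply Sg_ge1; lra).
  assert (hT : 1 <= T) by (apply Sg_ge1; lra).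
  assert (eT1 : T = 1 + p * Q) by (unfold T, Q; apply Sg_succ).
  assert (eT2 : T = Q + P) by reflexivity.
  assert (hP : 1 < P) by (apply Rlt_pow_R1; [lra|lia]).
  set (A := Q ^ S m). set (B := T ^ S m).
  assert (hA : 0 < A) by (apply pow_lt; lra).
  assert (hB : 0 < B) by (apply pow_lt; lra).
  set (W := (1 - th) * T - 1 - P) in *.
  set (L := lam * A / B).
  assert (hLW : L * W = 1).
  { unfold L. fold A B in fp. field_simplify; [|lra]. unfold Rdiv. apply (Rmult_eq_reg_r B); [|lra].
    rewrite Rmult_assoc, Rinv_l by lra. lra. }
  assert (hL : 0 < L) by (unfold L; apply Rdiv_lt_0_compat; nra).
  exists (P * L), L. split; [|nra].
  assert (eu : ((1 + P * L + th * L) / (1 + P * L + L)) = p * Q / T).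
  { apply (Rmult_eq_reg_r (T * (1 + P * L + L))); [|apply Rmult_integral_contrapositive; split; nra].
    field_simplify; [|lra|nra].
    assert (e1 : T * (1 + P * L + th * L) - p * Q * (1 + P * L + L) = 1 - L * W) by (unfold W; rewrite eT1; ring).
    rewrite hLW in e1. lra. }
  assert (ev : ((1 + th * (P * L) + L) / (1 + P * L + L)) = Q / T).
  { apply (Rmult_eq_reg_r (T * (1 + P * L + L))); [|apply Rmult_integral_contrapositive; split; nra].
    field_simplify; [|lra|nra].
    assert (e1 : T * (1 + th * (P * L) + L) - Q * (1 + P * L + L) = P * (1 - L * W)) by (unfold W; rewrite eT2; ring).
    rewrite hLW in e1. lra. }
  split; [nra|split; [lra|split]].
  - rewrite eu. unfold Rdiv. rewrite !Rpow_mult_distr, pow_inv. fold P A B. unfold L. unfold Rdiv. ring.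
  - rewrite ev. unfold Rdiv. rewrite !Rpow_mult_distr, pow_inv. fold A B. unfold L. unfold Rdiv. ring.
Qed.

Theorem mainTheorem11 (k : nat) (lam theta : R)
  (hk : (4 <= k)%nat) (hlam : 0 < lam) (hth0 : 0 < theta) (hth1 : theta < 1) :
  ((theta >= theta_c' k \/ (theta < theta_c' k /\ lam < lambda_cr' k theta)) ->
     exactly_one_TISGM k lam theta) /\
  ((theta < theta_c k /\ lam > lambda_cr k theta) ->
     at_least_three_TISGM k lam theta).
Proof.
  destruct (sym_exists k lam theta ltac:(lia) hlam hth0 hth1) as [x0 hx0].
  split.
  - intros cond. exists x0, x0. split; [exact hx0|].
    intros x' y' hs.
    destruct (Rtotal_order x' y') as [l|[e|g]].
    + exfalso. exact (asym k lam theta y' x' hk hlam hth0 hth1 cond (sol_swap _ _ _ _ _ hs) l).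
    + subst y'. pose proof (sym_unique k lam theta x' x0 ltac:(lia) hlam hth0 hth1 hs hx0). split; congruence.
    + exfalso. exact (asym k lam theta x' y' hk hlam hth0 hth1 cond hs g).
  - intros [c1 c2].
    destruct (asym_exists k lam theta hk hlam hth0 hth1 c1 c2) as [x [y [hs hyx]]].
    exists x0, x0, x, y, y, x.
    split; [exact hx0|]. split; [exact hs|]. split; [exact (sol_swap _ _ _ _ _ hs)|].
    split; [intro E; injection E; intros; subst; lra|].
    split; [intro E; injection E; intros; subst; lra|].
    intro E; injection E; intros; subst; lra.
Qed.
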